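(* Let $N>1$ be an integer and let $C_1,C_2>0$. For $0<y\le 1$, coprime integers $p,q$ with $q\ge1$ and $0<p/q\le 1$, and real $\delta$, define \[ T_y=\frac{1}{q\,(y+2i\delta)^{1/2}}\sum_{m=-\infty}^{\infty} S\!\left(\frac{p}{q},\frac{m}{q}\right)\exp\!\left(-\frac{\pi}{y+2i\delta}\Big(\frac{m}{q}-\frac{1}{N}\Big)^2\right), \qquad S\!\left(\frac{p}{q},t\right)=\sum_{\ell=1}^{q}e^{2\pi i\left(\frac{p}{q}\ell^2+t\ell\right)}. \] Then there is a constant $C$ (independent of $y,p,q,\delta$) such that whenever $q\le C_1 y^{-1/2}$ and $q|\delta|\le C_2 y^{1/2}$ (so that $x=p/q+\delta$ is close to $p/q$): if $N\mid q$, then \[ \left|T_y-S\!\left(\frac{p}{q},\frac{1}{N}\right)\frac{1}{q\,(y+2i\delta)^{1/2}}\right|\le C\,y^{-1/4}; \] and if $N\nmid q$, then $|T_y|\le C\,y^{-1/4}$.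
   Context: $(y+2i\delta)^{1/2}$ denotes the principal branch of the square root (the argument $y+2i\delta$ lies in the right half-plane). *)

(* Defs.v *)
From Stdlib Require Import Reals Lra ZArith.
From Coquelicot Require Import Coquelicot.
Open Scope R_scope.

Definition cexp (z : C) : C :=
  (exp (fst z) * cos (snd z), exp (fst z) * sin (snd z)).

Definition csqrt (w : C) : C :=
  (sqrt ((Cmod w + fst w) / 2),
   (if Rle_dec 0 (snd w) then 1 else -1) * sqrt ((Cmod w - fst w) / 2)).

Fixpoint csum1 (n : nat) (f : nat -> C) : C :=
  match n with
  | O => RtoC 0
  | S k => Cplus (csum1 k f) (f (S k))
  end.

Definition gaussS (q : nat) (a t : R) : C :=
  csum1 q (fun l => cexp (0, 2 * PI * (a * INR l ^ 2 + t * INR l))).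

Definition is_zseries (f : Z -> C) (l : C) : Prop :=
  exists a b : C,
    is_series (fun n : nat => f (Z.of_nat n)) a /\
    is_series (fun n : nat => f (- Z.of_nat (S n))%Z) b /\
    l = Cplus a b.

Definition Tterm (N : nat) (y : R) (p q : Z) (delta : R) (m : Z) : C :=
  let w : C := (y, 2 * delta) in
  let u : R := IZR m / IZR q - 1 / INR N in
  Cmult (gaussS (Z.to_nat q) (IZR p / IZR q) (IZR m / IZR q))
        (cexp (Cmult (RtoC (- PI * u ^ 2)) (Cinv w))).

Definition Tpref (y : R) (q : Z) (delta : R) : C :=
  Cinv (Cmult (RtoC (IZR q)) (csqrt (y, 2 * delta))).

(* Main.v *)
Require Import Defs.
From Stdlib Require Import Reals ZArith Lra Lia.
From Coquelicot Require Import Coquelicot.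
Open Scope R_scope.

Fixpoint rsum (n : nat) (f : nat -> R) : R :=
  match n with O => 0 | S k => rsum k f + f k end.

Lemma rsum_ext n f g : (forall i, (i < n)%nat -> f i = g i) -> rsum n f = rsum n g.
Proof. induction n; simpl; intros H; auto. rewrite IHn by (intros; apply H; lia). rewrite H by lia. auto. Qed.

Lemma rsum_plus n f g : rsum n (fun i => f i + g i) = rsum n f + rsum n g.
Proof. induction n; simpl; [lra|rewrite IHn; lra]. Qed.

Lemma rsum_scal n c f : rsum n (fun i => c * f i) = c * rsum n f.
Proof. induction n; simpl; [lra|rewrite IHn; lra]. Qed.

Lemma rsum_scal_r n c f : rsum n (fun i => f i * c) = rsum n f * c.
Proof. induction n; simpl; [lra|rewrite IHn; lra]. Qed.

Lemma rsum_le n f g : (forall i, (i<n)%nat -> f i <= g i) -> rsum n f <= rsum n g.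
Proof. induction n; simpl; intros H; [lra|]. pose proof (H n ltac:(lia)). 
  assert (rsum n f <= rsum n g) by (apply IHn; intros; apply H; lia). lra. Qed.

Lemma rsum_const n c : rsum n (fun _ => c) = INR n * c.
Proof. induction n; simpl rsum; [simpl; lra|rewrite IHn, S_INR; lra]. Qed.

Lemma rsum_zero n : rsum n (fun _ => 0) = 0.
Proof. rewrite rsum_const; lra. Qed.

Lemma rsum_mul n f g : rsum n f * rsum n g = rsum n (fun k => rsum n (fun l => f k * g l)).
Proof.
  rewrite (rsum_ext n (fun k => rsum n (fun l => f k * g l)) (fun k => f k * rsum n g)).
  - rewrite rsum_scal_r; auto.
  - intros; apply rsum_scal.
Qed.

Lemma rsum_swap n m F : rsum n (fun i => rsum m (fun j => F i j)) = rsum m (fun j => rsum n (fun i => F i j)).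
Proof.
  induction n; simpl.
  - rewrite rsum_zero; auto.
  - rewrite IHn, <- rsum_plus. auto.
Qed.

Lemma rsum_telescope n F : rsum n (fun k => F (S k) - F k) = F n - F 0%nat.
Proof. induction n; simpl; [lra|rewrite IHn; lra]. Qed.

Lemma rsum_shift1 n f : rsum n (fun i => f (S i)) = rsum n f - f 0%nat + f n.
Proof. induction n; simpl; [lra| rewrite IHn; lra]. Qed.

Lemma rsum_periodic n f : (forall i, f (i + n)%nat = f i) ->
  forall s, rsum n (fun i => f (i + s)%nat) = rsum n f.
Proof.
  intros Hp s; induction s.
  - apply rsum_ext; intros; f_equal; lia.
  - pose proof (rsum_shift1 n (fun j => f (j + s)%nat)) as E. simpl in E.
    rewrite (rsum_ext n _ (fun i => f (S (i + s)))) by (intros; f_equal; lia).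
    rewrite E, IHs. replace (n + s)%nat with (s + n)%nat by lia.
    rewrite Hp. lra.
Qed.

Lemma rsum_ind n c : rsum n (fun h => if Nat.eq_dec h c then 1 else 0) = if Nat.ltb c n then 1 else 0.
Proof.
  induction n; simpl rsum.
  - destruct (Nat.ltb_spec c 0); [lia|lra].
  - rewrite IHn. destruct (Nat.eq_dec n c); destruct (Nat.ltb_spec c n); destruct (Nat.ltb_spec c (S n)); try lia; lra.
Qed.

Lemma rsum_ind_le n c : rsum n (fun h => if Nat.eq_dec h c then 1 else 0) <= 1.
Proof. rewrite rsum_ind. destruct (Nat.ltb c n); lra. Qed.

Lemma periodZ (f : R -> R) : (forall x k, f (x + 2 * INR k * PI) = f x) ->
  forall x z, f (x + 2 * PI * IZR z) = f x.
Proof.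
  intros Hf x z.
  destruct (Z_le_gt_dec 0 z).
  - rewrite <- (Z2Nat.id z) by lia. rewrite <- INR_IZR_INZ.
    replace (x + 2*PI*INR (Z.to_nat z)) with (x + 2 * INR (Z.to_nat z) * PI) by ring. apply Hf.
  - replace z with (- Z.of_nat (Z.to_nat (-z)))%Z by lia. rewrite opp_IZR, <- INR_IZR_INZ.
    set (k := Z.to_nat (-z)).
    rewrite <- (Hf (x + 2*PI*(- INR k)) k). f_equal; ring.
Qed.

Lemma cos_periodZ x z : cos (x + 2 * PI * IZR z) = cos x.
Proof. apply periodZ. apply cos_period. Qed.
Lemma sin_periodZ x z : sin (x + 2 * PI * IZR z) = sin x.
Proof. apply periodZ. apply sin_period. Qed.

Lemma cos_sum_zero n a b z : INR n * a = 2 * PI * IZR z -> sin (a/2) <> 0 ->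
  rsum n (fun k => cos (a * INR k + b)) = 0.
Proof.
  intros H Hs.
  set (F := fun k => sin (a * INR k + b - a/2)).
  assert (E: rsum n (fun k => 2 * sin (a/2) * cos (a * INR k + b)) = F n - F 0%nat).
  { rewrite <- (rsum_telescope n F). apply rsum_ext. intros i _. unfold F. rewrite S_INR.
    replace (a * (INR i + 1) + b - a/2) with ((a*INR i + b) + a/2) by field.
    replace (a * INR i + b - a/2) with ((a*INR i + b) - a/2) by field.
    rewrite sin_plus, sin_minus. ring. }
  rewrite rsum_scal in E. unfold F in E.
  replace (a * INR n + b - a / 2) with ((a * INR 0 + b - a/2) + 2 * PI * IZR z) in E
    by (rewrite <- H; change (INR 0) with 0; field).
  rewrite sin_periodZ in E.
  apply Rmult_eq_reg_l with (2 * sin (a/2)); [lra|].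
  apply Rmult_integral_contrapositive; split; lra.
Qed.

Lemma cexp0_fst x : fst (cexp (0, x)) = cos x.
Proof. unfold cexp; cbn [fst snd]; rewrite exp_0; ring. Qed.
Lemma cexp0_snd x : snd (cexp (0, x)) = sin x.
Proof. unfold cexp; cbn [fst snd]; rewrite exp_0; ring. Qed.
Lemma Cplus_fst u v : fst (Cplus u v) = fst u + fst v.
Proof. reflexivity. Qed.
Lemma Cplus_snd u v : snd (Cplus u v) = snd u + snd v.
Proof. reflexivity. Qed.

Lemma gauss_fst n a t : fst (gaussS n a t) = rsum n (fun i => cos (2*PI*(a * INR (S i) ^2 + t * INR (S i)))).
Proof.
  unfold gaussS. induction n.
  - reflexivity.
  - change (csum1 (S n) ?f) with (Cplus (csum1 n f) (f (S n))).
    change (rsum (S n) ?f) with (rsum n f + f n).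
    rewrite Cplus_fst, IHn, cexp0_fst. reflexivity.
Qed.

Lemma gauss_snd n a t : snd (gaussS n a t) = rsum n (fun i => sin (2*PI*(a * INR (S i) ^2 + t * INR (S i)))).
Proof.
  unfold gaussS. induction n.
  - reflexivity.
  - change (csum1 (S n) ?f) with (Cplus (csum1 n f) (f (S n))).
    change (rsum (S n) ?f) with (rsum n f + f n).
    rewrite Cplus_snd, IHn, cexp0_snd. reflexivity.
Qed.

Lemma div2_cases (n h : nat) (p : Z) : (1 <= n)%nat -> (h < n)%nat -> Z.gcd p (Z.of_nat n) = 1%Z ->
  forall z : Z, (2 * p * Z.of_nat h = z * Z.of_nat n)%Z -> h = 0%nat \/ h = (n / 2)%nat.
Proof.
  intros Hn Hh Hg z Hz.
  assert (D: (Z.of_nat n | p * (2 * Z.of_nat h))%Z).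
  { exists z. lia. }
  apply Z.gauss in D; [| rewrite Z.gcd_comm; auto].
  destruct D as [w Hw].
  assert (w = 0 \/ w = 1)%Z by nia.
  destruct H; subst; [left; lia| right].
  rewrite (Nat.div_unique n 2 h 0); lia.
Qed.

Lemma gauss_bound (n : nat) (p m : Z) : (1 <= n)%nat -> Z.gcd p (Z.of_nat n) = 1%Z ->
  Cmod (gaussS n (IZR p / INR n) (IZR m / INR n)) <= sqrt (2 * INR n).
Proof.
  intros Hn Hg.
  assert (Hn0 : INR n <> 0) by (apply not_0_INR; lia).
  assert (Hnp : 0 < INR n) by (apply lt_0_INR; lia).
  set (a := IZR p / INR n). set (t := IZR m / INR n).
  set (th := fun l : nat => 2 * PI * (a * INR l ^ 2 + t * INR l)).
  unfold Cmod. apply sqrt_le_1_alt.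
  rewrite gauss_fst, gauss_snd.
  change (rsum n (fun i => cos (th (S i))) ^ 2 + rsum n (fun i => sin (th (S i))) ^ 2 <= 2 * INR n).
  assert (Hsq: rsum n (fun i => cos (th (S i))) ^ 2 + rsum n (fun i => sin (th (S i))) ^ 2
     = rsum n (fun k => rsum n (fun l => cos (th (S l) - th (S k))))).
  { rewrite <- !Rsqr_pow2. unfold Rsqr. rewrite 2!rsum_mul, <- rsum_plus. apply rsum_ext; intros.
    rewrite <- rsum_plus. apply rsum_ext; intros. rewrite cos_minus. ring. }
  rewrite Hsq.
  assert (Hper: forall K, rsum n (fun l => cos (th (S l) - th K)) = rsum n (fun h => cos (th (h + K)%nat - th K))).
  { intros K. set (phi := fun l => cos (th l - th K)).
    assert (Pp : forall i, phi (i + n)%nat = phi i).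
    { intros i. unfold phi.
      replace (th (i+n)%nat - th K) with ((th i - th K) + 2*PI*IZR (2*p*Z.of_nat i + p*Z.of_nat n + m)).
      - apply cos_periodZ.
      - unfold th, a, t. rewrite plus_INR, !plus_IZR, !mult_IZR, <- !INR_IZR_INZ. field. auto. }
    change (rsum n (fun l => phi (S l)) = rsum n (fun h => phi (h + K)%nat)).
    rewrite (rsum_periodic n phi Pp K).
    rewrite <- (rsum_periodic n phi Pp 1). apply rsum_ext; intros; f_equal; lia. }
  rewrite (rsum_ext n _ (fun k => rsum n (fun h => cos (th (h + S k)%nat - th (S k))))) by (intros; apply Hper).
  rewrite rsum_swap.
  assert (Hin: forall h, (h < n)%nat -> rsum n (fun k => cos (th (h + S k)%nat - th (S k))) <=
     INR n * ((if Nat.eq_dec h 0 then 1 else 0) + (if Nat.eq_dec h (n/2) then 1 else 0))).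
  { intros h Hh.
    set (al := 4 * PI * IZR p * INR h / INR n).
    set (be := al + 2 * PI * (IZR p * INR h ^ 2 + IZR m * INR h) / INR n).
    rewrite (rsum_ext n _ (fun k => cos (al * INR k + be))).
    2:{ intros k _. f_equal. unfold th, be, al, a, t. rewrite plus_INR, S_INR. field. auto. }
    assert (Hle : rsum n (fun k => cos (al * INR k + be)) <= INR n).
    { rewrite <- (Rmult_1_r (INR n)), <- rsum_const. apply rsum_le. intros. apply COS_bound. }
    destruct (Req_dec (sin (al / 2)) 0) as [Hs|Hs].
    - apply sin_eq_0_0 in Hs. destruct Hs as [z Hz].
      assert (Hz2 : (2 * p * Z.of_nat h = z * Z.of_nat n)%Z).
      { apply eq_IZR. rewrite !mult_IZR, <- !INR_IZR_INZ.
        unfold al in Hz. pose proof PI_RGT_0.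
        apply Rmult_eq_reg_r with (PI / INR n); [|apply Rgt_not_eq; apply Rdiv_lt_0_compat; lra].
        replace (IZR z * INR n * (PI / INR n)) with (IZR z * PI) by (field; auto).
        rewrite <- Hz. field. auto. }
      destruct (div2_cases n h p Hn Hh Hg z Hz2) as [E|E].
      + destruct (Nat.eq_dec h 0); [|lia]. destruct (Nat.eq_dec h (n/2)); nra.
      + destruct (Nat.eq_dec h (n/2)); [|lia]. destruct (Nat.eq_dec h 0); nra.
    - rewrite (cos_sum_zero n al be (2 * p * Z.of_nat h)); auto.
      + destruct (Nat.eq_dec h 0); destruct (Nat.eq_dec h (n/2)); nra.
      + unfold al. rewrite !mult_IZR, <- INR_IZR_INZ. field. auto. }
  eapply Rle_trans. apply rsum_le. apply Hin.
  rewrite rsum_scal, rsum_plus.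
  pose proof (rsum_ind_le n 0). pose proof (rsum_ind_le n (n/2)). nra.
Qed.

Lemma pow_decr (r : R) (a b : nat) : 0 <= r <= 1 -> (b <= a)%nat -> r ^ a <= r ^ b.
Proof.
  intros Hr Hab. replace a with (b + (a - b))%nat by lia. rewrite pow_add.
  assert (0 <= r ^ b) by (apply pow_le; lra).
  assert (r ^ (a - b) <= 1). { rewrite <- (pow1 (a - b)). apply pow_incr. lra. }
  assert (0 <= r ^ (a - b)) by (apply pow_le; lra). nra.
Qed.

Lemma rsum_geom (r : R) M : r < 1 -> rsum M (fun n => r ^ n) * (1 - r) = 1 - r ^ M.
Proof. intros. induction M; simpl rsum. simpl; lra. rewrite Rmult_plus_distr_r, IHM. simpl. ring. Qed.

Lemma rsum_geom_le (r : R) M : 0 <= r < 1 -> rsum M (fun n => r ^ n) <= 1 / (1 - r).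
Proof.
  intros Hr. pose proof (rsum_geom r M ltac:(lra)).
  assert (0 <= r ^ M) by (apply pow_le; lra).
  apply Rmult_le_reg_r with (1 - r); [lra|]. rewrite H. field_simplify; lra.
Qed.

Lemma rsum_shifted (r : R) : 0 <= r < 1 -> forall s M,
  rsum M (fun n => r ^ Z.abs_nat (Z.of_nat n - Z.of_nat s)) <= (1 + r - r ^ (S s)) / (1 - r).
Proof.
  intros Hr s. induction s; intros M.
  - rewrite (rsum_ext M _ (fun n => r ^ n)) by (intros; f_equal; lia).
    eapply Rle_trans. apply rsum_geom_le; auto. apply Rmult_le_compat_r. 
    apply Rlt_le, Rinv_0_lt_compat; lra. simpl; lra.
  - destruct M. simpl rsum. apply Rdiv_le_0_compat; [|lra].
    pose proof (pow_decr r (S (S s)) 1 ltac:(lra) ltac:(lia)). simpl in *; lra.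
    set (g := fun n => r ^ Z.abs_nat (Z.of_nat n - Z.of_nat (S s))).
    assert (E : rsum (S M) g = g 0%nat + rsum M (fun n => g (S n))).
    { rewrite rsum_shift1. simpl rsum. ring. }
    rewrite E. rewrite (rsum_ext M _ (fun n => r ^ Z.abs_nat (Z.of_nat n - Z.of_nat s)))
      by (intros; unfold g; f_equal; lia).
    unfold g. replace (Z.abs_nat (Z.of_nat 0 - Z.of_nat (S s))) with (S s) by lia.
    specialize (IHs M).
    apply Rle_trans with (r ^ S s + (1 + r - r ^ S s) / (1 - r)); [lra|].
    right. simpl. field. lra.
Qed.

Lemma rsum_shifted2 (r : R) : 0 <= r < 1 -> forall s M,
  rsum M (fun n => r ^ Z.abs_nat (Z.of_nat n - Z.of_nat s)) <= 2 / (1 - r).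
Proof.
  intros Hr s M. eapply Rle_trans. apply rsum_shifted; auto.
  apply Rmult_le_compat_r. apply Rlt_le, Rinv_0_lt_compat; lra.
  pose proof (pow_le r (S s) ltac:(lra)). lra.
Qed.

Lemma norm_sum_n_C (a : nat -> C) M : Cmod (sum_n a M) <= rsum (S M) (fun n => Cmod (a n)).
Proof.
  induction M.
  - rewrite sum_O. simpl rsum. lra.
  - rewrite sum_Sn. eapply Rle_trans. apply Cmod_triangle.
    change (rsum (S (S M)) (fun n => Cmod (a n))) with (rsum (S M) (fun n => Cmod (a n)) + Cmod (a (S M))).
    lra.
Qed.

Lemma series_norm_le (a : nat -> C) l B : is_series a l ->
  (forall M, rsum M (fun n => Cmod (a n)) <= B) -> Cmod l <= B.
Proof.
  intros H HB.
  assert (L: is_lim_seq (fun M => Cmod (sum_n a M)) (Cmod l)).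
  { unfold is_lim_seq. eapply filterlim_comp. apply H. apply (filterlim_norm l). }
  assert (Rbar_le (Cmod l) B).
  { eapply is_lim_seq_le. 2: apply L. 2: apply is_lim_seq_const.
    intros M. eapply Rle_trans. apply norm_sum_n_C. apply HB. }
  simpl in H0. auto.
Qed.

Lemma zseries_geom_bound (f : Z -> C) (s : nat) (G r : R) : 0 <= G -> 0 <= r < 1 ->
  (forall m, Cmod (f m) <= G * r ^ (Z.abs_nat (m - Z.of_nat s))) ->
  exists Sig, is_zseries f Sig /\ Cmod Sig <= 3 * G / (1 - r).
Proof.
  intros HG Hr Hf.
  set (b := fun n : nat => G * r ^ Z.abs_nat (Z.of_nat n - Z.of_nat s)).
  assert (Hgeo : ex_series (fun n : nat => G * r ^ n)).
  { exists (G * / (1 - r)). apply (is_series_scal_l G (fun n => r ^ n)).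
    apply is_series_geom. rewrite Rabs_pos_eq; lra. }
  assert (Hb : ex_series b).
  { apply (ex_series_incr_n b s). eapply ex_series_ext. 2: apply Hgeo.
    intros n. unfold b. f_equal. f_equal. lia. }
  assert (E1 : ex_series (fun n : nat => f (Z.of_nat n))).
  { apply (@ex_series_le C_AbsRing C_CompleteNormedModule _ b); [intros n; apply Hf|auto]. }
  assert (E2 : ex_series (fun n : nat => f (- Z.of_nat (S n))%Z)).
  { apply (@ex_series_le C_AbsRing C_CompleteNormedModule _ (fun n => G * r ^ n)); [intros n|auto].
    eapply Rle_trans. apply Hf. apply Rmult_le_compat_l; auto. apply pow_decr. lra. lia. }
  destruct E1 as [la Ha]. destruct E2 as [lb Hb2].
  exists (Cplus la lb). split.
  - exists la, lb. auto.
  - eapply Rle_trans. apply Cmod_triangle.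
    assert (Cmod la <= 2 * G / (1 - r)).
    { apply (series_norm_le _ _ _ Ha). intros M.
      eapply Rle_trans. apply (rsum_le _ _ b). intros; apply Hf.
      unfold b. rewrite rsum_scal. 
      pose proof (rsum_shifted2 r Hr s M).
      replace (2 * G / (1 - r)) with (G * (2 / (1 - r))) by (field; lra).
      apply Rmult_le_compat_l; auto. }
    assert (Cmod lb <= G / (1 - r)).
    { apply (series_norm_le _ _ _ Hb2). intros M.
      eapply Rle_trans. apply (rsum_le _ _ (fun n => G * r ^ n)). intros; 
      eapply Rle_trans. apply Hf. apply Rmult_le_compat_l; auto. apply pow_decr. lra. lia.
      rewrite rsum_scal. pose proof (rsum_geom_le r M Hr).
      replace (G / (1 - r)) with (G * (1 / (1 - r))) by (field; lra).
      apply Rmult_le_compat_l; auto. }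
    replace (3 * G / (1 - r)) with (2 * G / (1 - r) + G / (1 - r)) by (field; lra). lra.
Qed.

Lemma sum_n_delta (c : C) (m0 : nat) M :
  sum_n (fun n => if Nat.eq_dec n m0 then c else RtoC 0) M = if Nat.leb m0 M then c else RtoC 0.
Proof.
  induction M.
  - rewrite sum_O. destruct (Nat.eq_dec 0 m0); destruct (Nat.leb_spec m0 0); auto; lia.
  - rewrite sum_Sn, IHM. change plus with Cplus.
    destruct (Nat.eq_dec (S M) m0); destruct (Nat.leb_spec m0 M); destruct (Nat.leb_spec m0 (S M));
      try lia; match goal with |- ?a = ?b => change (@eq C a b) end; ring.
Qed.

Lemma is_series_delta (c : C) (m0 : nat) :
  is_series (fun n => if Nat.eq_dec n m0 then c else RtoC 0) c.
Proof.
  unfold is_series. eapply filterlim_ext_loc.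
  2: apply filterlim_const.
  exists m0. intros M HM. rewrite sum_n_delta. destruct (Nat.leb_spec m0 M); auto; lia.
Qed.

Lemma zseries_modify (f : Z -> C) (m0 : nat) Sig :
  is_zseries (fun m => if Z.eq_dec m (Z.of_nat m0) then RtoC 0 else f m) Sig ->
  is_zseries f (Cplus Sig (f (Z.of_nat m0))).
Proof.
  intros [a [b [Ha [Hb E]]]].
  exists (Cplus a (f (Z.of_nat m0))), b. split; [|split].
  - pose proof (is_series_plus _ _ _ _ Ha (is_series_delta (f (Z.of_nat m0)) m0)) as H.
    eapply is_series_ext. 2: apply H. intros n. simpl. change plus with Cplus.
    destruct (Z.eq_dec (Z.of_nat n) (Z.of_nat m0)); destruct (Nat.eq_dec n m0); try lia.
    + subst. match goal with |- ?a = ?b => change (@eq C a b) end; ring.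
    + match goal with |- ?a = ?b => change (@eq C a b) end; ring.
  - eapply is_series_ext. 2: apply Hb. intros n. cbv beta.
    destruct (Z.eq_dec (- Z.of_nat (S n)) (Z.of_nat m0)); [lia|auto].
  - rewrite E. match goal with |- ?a = ?b => change (@eq C a b) end; ring.
Qed.

Lemma exp_le_mono x y : x <= y -> exp x <= exp y.
Proof. intros [H|H]; [left; apply exp_increasing; auto | subst; lra]. Qed.

Lemma exp_mult_INR x k : exp (x * INR k) = exp x ^ k.
Proof. induction k. simpl. rewrite Rmult_0_r, exp_0. auto.
  rewrite S_INR, Rmult_plus_distr_l, exp_plus, IHk, Rmult_1_r. simpl. ring. Qed.

Lemma Cmod_cexp z : Cmod (cexp z) = exp (fst z).
Proof.
  unfold Cmod, cexp; cbn [fst snd].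
  replace ((exp (fst z) * cos (snd z)) ^ 2 + (exp (fst z) * sin (snd z)) ^ 2)
    with (exp (fst z) ^ 2 * ((sin (snd z))² + (cos (snd z))²)) by (unfold Rsqr; ring).
  rewrite sin2_cos2, Rmult_1_r. apply sqrt_pow2. apply Rlt_le, exp_pos.
Qed.

Lemma fst_mult_inv c y d : 0 < y -> fst (Cmult (RtoC c) (Cinv (y, d))) = c * y / (y ^ 2 + d ^ 2).
Proof.
  intros Hy. unfold Cmult, Cinv, RtoC; cbn [fst snd]. field.
  nra.
Qed.

Lemma Cmod_csqrt w : 0 < fst w -> Cmod (csqrt w) = sqrt (Cmod w).
Proof.
  intros Hw. pose proof (re_le_Cmod w) as H. unfold Re in H. apply Rabs_le_between in H.
  unfold csqrt. unfold Cmod at 1. cbn [fst snd]. f_equal.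
  rewrite <- !Rsqr_pow2, Rsqr_mult, !Rsqr_sqrt by lra.
  destruct (Rle_dec 0 (snd w)); unfold Rsqr; field.
Qed.

Lemma cexp_one z : fst z = 0 -> snd z = 0 -> cexp z = RtoC 1.
Proof.
  intros H1 H2. unfold cexp, RtoC. rewrite H1, H2, exp_0, cos_0, sin_0. f_equal; ring.
Qed.

Lemma Cmod_pref y q delta : 0 < y -> 1 <= IZR q ->
  Cmod (Tpref y q delta) = / (IZR q * sqrt (Cmod (y, 2 * delta))).
Proof.
  intros Hy Hq. unfold Tpref.
  assert (Hm : 0 < Cmod (y, 2 * delta)).
  { apply Rlt_le_trans with (Rabs y). rewrite Rabs_pos_eq; lra. apply (re_le_Cmod (y, 2*delta)). }
  assert (Hs : 0 < sqrt (Cmod (y, 2 * delta))) by (apply sqrt_lt_R0; auto).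
  rewrite Cmod_inv, Cmod_mult, Cmod_R, Cmod_csqrt, Rabs_pos_eq; cbn [fst]; auto; try lra.
  apply Cmod_gt_0. rewrite Cmod_mult, Cmod_R, Cmod_csqrt; cbn [fst]; auto.
  rewrite Rabs_pos_eq by lra. apply Rmult_lt_0_compat; lra.
Qed.

Lemma final_ineq (q W y Nr A : R) : 1 <= q -> 0 < W -> 0 < y -> 1 <= Nr ->
  A = y / (W ^ 2 * q ^ 2 * Nr ^ 2) ->
  / (q * sqrt W) * (sqrt (2 * q) * exp (- PI * A / 2)) <= sqrt 2 * sqrt Nr * Rpower y (- (1 / 4)).
Proof.
  intros Hq HW Hy HN HA.
  assert (HM : 0 < W * q * Nr) by (apply Rmult_lt_0_compat; [apply Rmult_lt_0_compat|]; lra).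
  assert (HyA : y = A * ((W * q * Nr) * (W * q * Nr))) by (rewrite HA; field; repeat split; lra).
  assert (HA0 : 0 < A) by (rewrite HA; apply Rdiv_lt_0_compat; [lra|];
     apply Rmult_lt_0_compat; [apply Rmult_lt_0_compat|]; apply pow_lt; lra).
  clear HA.
  set (P := Rpower y (1/4)).
  assert (HP : 0 < P) by (unfold P, Rpower; apply exp_pos).
  assert (HP2 : P * P = sqrt y).
  { unfold P. rewrite <- Rpower_plus. replace (1/4 + 1/4) with (/2) by field. apply Rpower_sqrt; auto. }
  rewrite Rpower_Ropp. fold P.
  set (e := exp (- PI * A / 2)).
  assert (He : 0 < e) by apply exp_pos.
  set (E := exp (- (PI * A))).
  assert (HE : 0 < E) by apply exp_pos.
  assert (He2 : e * e = E).
  { unfold e, E. rewrite <- exp_plus. f_equal. field. }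
  assert (HEA : E * E * A <= 1).
  { assert (E * E = / exp (2 * PI * A)).
    { unfold E. rewrite <- exp_plus, <- exp_Ropp. f_equal. ring. }
    rewrite H. pose proof (exp_ineq1_le A).
    assert (exp A <= exp (2 * PI * A)) by (apply exp_le_mono; pose proof PI2_1; nra).
    pose proof (exp_pos (2 * PI * A)).
    apply Rmult_le_reg_l with (exp (2 * PI * A)); auto.
    rewrite <- Rmult_assoc, Rinv_r by lra. lra. }
  assert (HE1 : E <= 1).
  { unfold E. rewrite <- exp_0. apply exp_le_mono. pose proof PI_RGT_0. nra. }
  assert (HsW : 0 < sqrt W) by (apply sqrt_lt_R0; auto).
  assert (HsW2 : sqrt W * sqrt W = W) by (apply sqrt_sqrt; lra).
  assert (Hs2q : sqrt (2 * q) * sqrt (2 * q) = 2 * q) by (apply sqrt_sqrt; lra).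
  assert (Hs2 : sqrt 2 * sqrt 2 = 2) by (apply sqrt_sqrt; lra).
  assert (HsN : sqrt Nr * sqrt Nr = Nr) by (apply sqrt_sqrt; lra).
  assert (Hsy : 0 < sqrt y) by (apply sqrt_lt_R0; auto).
  assert (Hsyy : sqrt y * sqrt y = y) by (apply sqrt_sqrt; lra).
  assert (Key : E * sqrt y <= W * q * Nr).
  { apply Rsqr_incr_0_var; [|lra].
    unfold Rsqr.
    replace (E * sqrt y * (E * sqrt y)) with (E * E * (sqrt y * sqrt y)) by ring. rewrite Hsyy.
    rewrite HyA.
    replace (E * E * (A * (W * q * Nr * (W * q * Nr)))) with ((E * E * A) * (W * q * Nr * (W * q * Nr))) by ring.
    assert (0 < W * q * Nr * (W * q * Nr)) by nra.
    nra. }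
  apply Rsqr_incr_0_var.
  2:{ apply Rmult_le_pos; [apply Rmult_le_pos|]; try apply sqrt_pos. left; apply Rinv_0_lt_compat; auto. }
  unfold Rsqr.
  assert (Hq0 : 0 < q) by lra.
  replace (/ (q * sqrt W) * (sqrt (2 * q) * e) * (/ (q * sqrt W) * (sqrt (2 * q) * e)))
    with ((sqrt (2 * q) * sqrt (2 * q)) * (e * e) / (q * q * (sqrt W * sqrt W))) by (field; lra).
  replace (sqrt 2 * sqrt Nr * / P * (sqrt 2 * sqrt Nr * / P))
    with ((sqrt 2 * sqrt 2) * (sqrt Nr * sqrt Nr) / (P * P)) by (field; lra).
  rewrite Hs2q, He2, HsW2, Hs2, HsN, HP2.
  apply Rmult_le_reg_r with (q * q * W * sqrt y). 
  { apply Rmult_lt_0_compat; auto. nra. }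
  replace (2 * q * E / (q * q * W) * (q * q * W * sqrt y)) with (2 * q * (E * sqrt y)) by (field; lra).
  replace (2 * Nr / sqrt y * (q * q * W * sqrt y)) with (2 * q * (W * q * Nr)) by (field; lra).
  apply Rmult_le_compat_l; lra.
Qed.

Lemma Zfacts (N q s t m : Z) : (2 <= N)%Z -> q = (s * N + t)%Z -> (0 <= t < N)%Z ->
  (m * N - q <> 0)%Z -> (2 * (m * N - q) * (m * N - q) >= 1 + Z.abs (m - s))%Z.
Proof.
  intros HN Hq Ht Hj.
  assert (Z.abs (m * N - q) >= Z.abs (m - s))%Z.
  { subst q. destruct (Z_le_gt_dec (m - s) 0).
    - assert (m * N - (s * N + t) = (m - s) * N - t)%Z by ring. nia.
    - assert (m * N - (s * N + t) = (m - s) * N - t)%Z by ring. nia. }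
  assert ((m * N - q) * (m * N - q) >= Z.abs (m * N - q))%Z by nia.
  assert (Z.abs (m * N - q) >= 1)%Z by lia.
  lia.
Qed.

Lemma Cmod2 (y d : R) : Cmod (y, d) ^ 2 = y ^ 2 + d ^ 2.
Proof. unfold Cmod; cbn [fst snd]. apply pow2_sqrt. nra. Qed.

Lemma term_bound (N : nat) y p q delta m (s : Z) (A0 : R) :
  (1 < N)%nat -> 0 < y -> (1 <= q)%Z -> Z.gcd p q = 1%Z ->
  (0 <= q - s * Z.of_nat N < Z.of_nat N)%Z ->
  (m * Z.of_nat N - q <> 0)%Z -> 0 <= A0 ->
  A0 <= y / (Cmod (y, 2 * delta) ^ 2 * IZR q ^ 2 * INR N ^ 2) ->
  Cmod (Tterm N y p q delta m) <=
   sqrt (2 * IZR q) * exp (- PI * (y / (Cmod (y, 2 * delta) ^ 2 * IZR q ^ 2 * INR N ^ 2)) / 2)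
   * exp (- PI * A0 / 2) ^ Z.abs_nat (m - s).
Proof.
  intros HN Hy Hq Hg Hs Hj HA0 HA.
  set (A := y / (Cmod (y, 2 * delta) ^ 2 * IZR q ^ 2 * INR N ^ 2)) in *.
  assert (HAe : A = y / ((y ^ 2 + (2 * delta) ^ 2) * IZR q ^ 2 * INR N ^ 2)) by (unfold A; rewrite Cmod2; auto).
  clearbody A.
  assert (HNr : 2 <= INR N) by (replace 2 with (INR 2) by (simpl; lra); apply le_INR; lia).
  assert (Hqr : 1 <= IZR q) by (apply IZR_le in Hq; auto).
  assert (HD : 0 < y ^ 2 + (2 * delta) ^ 2) by nra.
  assert (Hqn : IZR q = INR (Z.to_nat q)). { rewrite INR_IZR_INZ. rewrite Z2Nat.id. reflexivity. lia. }
  unfold Tterm. cbv zeta. rewrite Cmod_mult, Rmult_assoc.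
  apply Rmult_le_compat.
  - apply Cmod_ge_0.
  - apply Cmod_ge_0.
  - rewrite Hqn. apply gauss_bound. lia. rewrite Z2Nat.id by lia. auto.
  - rewrite Cmod_cexp, fst_mult_inv by auto.
    rewrite <- exp_mult_INR, <- exp_plus. apply exp_le_mono.
    set (J := IZR (m * Z.of_nat N - q)).
    set (K := INR (Z.abs_nat (m - s))).
    assert (HK : 0 <= K) by apply pos_INR.
    assert (HJK : 2 * J * J >= 1 + K).
    { unfold J, K. rewrite INR_IZR_INZ, Nat2Z.inj_abs_nat.
      rewrite <- mult_IZR, <- mult_IZR, <- plus_IZR. apply IZR_ge.
      apply (Zfacts (Z.of_nat N) q s (q - s * Z.of_nat N)); lia. }
    assert (HuJ : (- PI * (IZR m / IZR q - 1 / INR N) ^ 2 * y / (y ^ 2 + (2 * delta) ^ 2))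
                  = - PI * A * (J * J)).
    { rewrite HAe. unfold J. rewrite minus_IZR, mult_IZR, <- INR_IZR_INZ. field. repeat split; lra. }
    rewrite HuJ.
    assert (HAp : 0 < A) by (rewrite HAe; apply Rdiv_lt_0_compat; [lra|];
       apply Rmult_lt_0_compat; [apply Rmult_lt_0_compat|]; try apply pow_lt; lra).
    pose proof PI_RGT_0.
    assert (A * (J * J) >= A / 2 + A0 * K / 2) by nra.
    nra.
Qed.

Theorem lemma1 (N : nat) (C1 C2 : R) :
  (1 < N)%nat -> 0 < C1 -> 0 < C2 ->
  exists K : R,
    forall (y : R) (p q : Z) (delta : R),
      0 < y -> y <= 1 ->
      Z.gcd p q = 1%Z -> (1 <= q)%Z ->
      0 < IZR p / IZR q -> IZR p / IZR q <= 1 ->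
      IZR q <= C1 * Rpower y (- (1 / 2)) ->
      IZR q * Rabs delta <= C2 * Rpower y (1 / 2) ->
      exists Sig : C,
        is_zseries (Tterm N y p q delta) Sig /\
        ((Z.divide (Z.of_nat N) q) ->
           Cmod (Cminus (Cmult (Tpref y q delta) Sig)
                 (Cmult (gaussS (Z.to_nat q) (IZR p / IZR q) (1 / INR N))
                        (Tpref y q delta)))
           <= K * Rpower y (- (1 / 4))) /\
        (~ Z.divide (Z.of_nat N) q ->
           Cmod (Cmult (Tpref y q delta) Sig) <= K * Rpower y (- (1 / 4))).
Proof.
  intros HN HC1 HC2.
  assert (HNr : 2 <= INR N) by (replace 2 with (INR 2) by (simpl; lra); apply le_INR; lia).
  set (A0 := 1 / ((C1 ^ 2 + 4 * C2 ^ 2) * INR N ^ 2)).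
  assert (HC : 0 < C1 ^ 2 + 4 * C2 ^ 2) by (pose proof (pow_lt C1 2 HC1); pose proof (pow_lt C2 2 HC2); lra).
  assert (HA0 : 0 < A0).
  { unfold A0. apply Rdiv_lt_0_compat; [lra|]. apply Rmult_lt_0_compat; auto. apply pow_lt; lra. }
  set (r := exp (- PI * A0 / 2)).
  assert (Hr : 0 <= r < 1).
  { split. apply Rlt_le, exp_pos. unfold r. rewrite <- exp_0. apply exp_increasing.
    pose proof PI_RGT_0. nra. }
  exists (3 * sqrt 2 * sqrt (INR N) / (1 - r)).
  intros y p q delta Hy Hy1 Hg Hq Hp1 Hp2 HqC1 HqC2.
  assert (Hqr : 1 <= IZR q) by (apply IZR_le in Hq; auto).
  set (W := Cmod (y, 2 * delta)).
  assert (HW2 : W ^ 2 = y ^ 2 + (2 * delta) ^ 2) by apply Cmod2.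
  assert (HW : 0 < W).
  { apply Rlt_le_trans with (Rabs y). rewrite Rabs_pos_eq; lra. apply (re_le_Cmod (y, 2*delta)). }
  set (A := y / (W ^ 2 * IZR q ^ 2 * INR N ^ 2)).
  assert (HAA0 : A0 <= A).
  { assert (Hsy : 0 < sqrt y) by (apply sqrt_lt_R0; auto).
    assert (Hsyy : sqrt y * sqrt y = y) by (apply sqrt_sqrt; lra).
    rewrite Rpower_Ropp in HqC1.
    replace (1/2) with (/2) in HqC1, HqC2 by field.
    rewrite Rpower_sqrt in HqC1, HqC2 by auto.
    assert (H1 : IZR q * sqrt y <= C1).
    { apply Rmult_le_compat_r with (r := sqrt y) in HqC1; [|lra].
      rewrite Rmult_assoc, Rinv_l in HqC1 by lra. lra. }
    assert (H1' : IZR q ^ 2 * y <= C1 ^ 2).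
    { rewrite <- Hsyy. replace (IZR q ^ 2 * (sqrt y * sqrt y)) with ((IZR q * sqrt y) ^ 2) by ring.
      apply pow_incr. split; [|auto]. apply Rmult_le_pos; lra. }
    assert (H2' : IZR q ^ 2 * delta ^ 2 <= C2 ^ 2 * y).
    { rewrite <- Hsyy. replace (IZR q ^ 2 * delta ^ 2) with ((IZR q * Rabs delta) ^ 2)
        by (rewrite <- (pow2_abs delta); ring).
      replace (C2 ^ 2 * (sqrt y * sqrt y)) with ((C2 * sqrt y) ^ 2) by ring.
      apply pow_incr. split; [|auto]. apply Rmult_le_pos; [lra|apply Rabs_pos]. }
    assert (HD : W ^ 2 * IZR q ^ 2 <= (C1 ^ 2 + 4 * C2 ^ 2) * y).
    { rewrite HW2. assert (y ^ 2 * IZR q ^ 2 <= C1 ^ 2 * y).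
      { replace (y ^ 2 * IZR q ^ 2) with (y * (IZR q ^ 2 * y)) by ring.
        replace (C1 ^ 2 * y) with (y * C1 ^ 2) by ring. apply Rmult_le_compat_l; lra. }
      nra. }
    assert (HD0 : 0 < W ^ 2 * IZR q ^ 2) by (apply Rmult_lt_0_compat; apply pow_lt; lra).
    assert (HN2 : 0 < INR N ^ 2) by (apply pow_lt; lra).
    unfold A0, A.
    replace (y / (W ^ 2 * IZR q ^ 2 * INR N ^ 2)) with (1 / ((W ^ 2 * IZR q ^ 2 / y) * INR N ^ 2))
      by (field; repeat split; lra).
    apply Rmult_le_compat_l; [lra|]. apply Rinv_le_contravar.
    apply Rmult_lt_0_compat; [apply Rdiv_lt_0_compat|]; lra.
    apply Rmult_le_compat_r; [lra|].
    apply Rmult_le_reg_r with y; auto. unfold Rdiv. rewrite Rmult_assoc, Rinv_l by lra. lra. }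
  set (G := sqrt (2 * IZR q) * exp (- PI * A / 2)).
  assert (HG : 0 <= G) by (apply Rmult_le_pos; [apply sqrt_pos|apply Rlt_le, exp_pos]).
  assert (HNz : (Z.of_nat N <> 0)%Z) by lia.
  pose proof (Z.div_mod q (Z.of_nat N) HNz) as Hdm.
  pose proof (Z.mod_pos_bound q (Z.of_nat N) ltac:(lia)) as Hmb.
  set (s := (q / Z.of_nat N)%Z) in *. set (t := (q mod Z.of_nat N)%Z) in *.
  assert (Hs0 : (0 <= s)%Z) by (apply Z.div_pos; lia).
  set (sn := Z.to_nat s).
  assert (Hsn : Z.of_nat sn = s) by (apply Z2Nat.id; auto).
  assert (Hst : (0 <= q - s * Z.of_nat N < Z.of_nat N)%Z) by lia.
  assert (Hfin : Cmod (Tpref y q delta) * (3 * G / (1 - r)) <=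
                 3 * sqrt 2 * sqrt (INR N) / (1 - r) * Rpower y (- (1 / 4))).
  { rewrite Cmod_pref by auto. fold W.
    pose proof (final_ineq (IZR q) W y (INR N) A Hqr HW Hy ltac:(lra) eq_refl) as F.
    unfold G.
    replace (/ (IZR q * sqrt W) * (3 * (sqrt (2 * IZR q) * exp (- PI * A / 2)) / (1 - r)))
      with (3 / (1 - r) * (/ (IZR q * sqrt W) * (sqrt (2 * IZR q) * exp (- PI * A / 2))))
      by (field; split; [lra|]; split; [|lra]; apply Rgt_not_eq, sqrt_lt_R0; auto).
    replace (3 * sqrt 2 * sqrt (INR N) / (1 - r) * Rpower y (- (1 / 4)))
      with (3 / (1 - r) * (sqrt 2 * sqrt (INR N) * Rpower y (- (1 / 4)))) by (field; lra).
    apply Rmult_le_compat_l; auto. apply Rdiv_le_0_compat; lra. }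
  assert (Hpref0 : 0 <= Cmod (Tpref y q delta)) by apply Cmod_ge_0.
  destruct (Z.eq_dec t 0) as [Ht0|Ht0].
  -
    set (f' := fun m => if Z.eq_dec m (Z.of_nat sn) then RtoC 0 else Tterm N y p q delta m).
    assert (Hb : forall m, Cmod (f' m) <= G * r ^ Z.abs_nat (m - Z.of_nat sn)).
    { intros m. unfold f'. destruct (Z.eq_dec m (Z.of_nat sn)).
      - rewrite Cmod_0. apply Rmult_le_pos; auto. apply pow_le; lra.
      - rewrite Hsn. apply term_bound; auto; try lra.
        intro. apply n. rewrite Hsn. nia. }
    destruct (zseries_geom_bound f' sn G r HG Hr Hb) as [Sig' [HS' HSb]].
    exists (Cplus Sig' (Tterm N y p q delta (Z.of_nat sn))). split; [|split].
    + apply zseries_modify. apply HS'.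
    + intros _.
      assert (HT : Tterm N y p q delta (Z.of_nat sn) = gaussS (Z.to_nat q) (IZR p / IZR q) (1 / INR N)).
      { assert (Hu : IZR (Z.of_nat sn) / IZR q = 1 / INR N).
        { rewrite Hsn. assert (q = s * Z.of_nat N)%Z by lia.
          assert (Hs1 : (1 <= s)%Z) by nia.
          rewrite H, mult_IZR, <- INR_IZR_INZ. field.
          repeat split; (lra || (apply not_0_IZR; lia)). }
        unfold Tterm. cbv zeta. rewrite Hu. rewrite cexp_one.
        - match goal with |- ?a = ?b => change (@eq C a b) end. ring.
        - unfold Cmult, RtoC. cbn [fst snd]. replace (1 / INR N - 1 / INR N) with 0 by ring. ring.
        - unfold Cmult, RtoC. cbn [fst snd]. replace (1 / INR N - 1 / INR N) with 0 by ring. ring. }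
      rewrite HT.
      replace (Cminus (Cmult (Tpref y q delta) (Cplus Sig' (gaussS (Z.to_nat q) (IZR p / IZR q) (1 / INR N))))
           (Cmult (gaussS (Z.to_nat q) (IZR p / IZR q) (1 / INR N)) (Tpref y q delta)))
        with (Cmult (Tpref y q delta) Sig') by ring.
      rewrite Cmod_mult. eapply Rle_trans; [|apply Hfin].
      apply Rmult_le_compat_l; auto.
    + intros Hnd. exfalso. apply Hnd. exists s. lia.
  -
    assert (Hb : forall m, Cmod (Tterm N y p q delta m) <= G * r ^ Z.abs_nat (m - Z.of_nat sn)).
    { intros m. rewrite Hsn. apply term_bound; auto; try lra.
      intro. assert (q = m * Z.of_nat N)%Z by lia.
      assert (t = 0)%Z.
      { unfold t. rewrite H0. apply Z.mod_mul. lia. }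
      auto. }
    destruct (zseries_geom_bound _ sn G r HG Hr Hb) as [Sig [HS HSb]].
    exists Sig. split; [auto|split].
    + intros [c Hc]. exfalso. apply Ht0. unfold t. rewrite Hc. apply Z.mod_mul. lia.
    + intros _. rewrite Cmod_mult. eapply Rle_trans; [|apply Hfin].
      apply Rmult_le_compat_l; auto.
Qed.
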